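(* Let $\pi$ be a $2$-sortable permutation. Then there exists a sequence of legal operations of the $\mathfrak{D}^2\mathfrak{I}$ machine that sorts $\pi$ and in which every occurrence of $d_0$ (resp. $d_1$, $d_2$) is performed in a configuration where condition ($\gamma$) (resp. ($\beta$), ($\alpha$)) holds.
   Context: The $\mathfrak{D}^2\mathfrak{I}$ machine consists of two decreasing stacks $D_1,D_2$ followed in series by an increasing stack $I$. Elements of $D_1,D_2$ must be in decreasing order from top to bottom (top largest); elements of $I$ in increasing order from top to bottom (top smallest). Operations: $d_0$ pushes the next input element (called $Input$) into $D_1$; $d_1$ moves $Top(D_1)$ to $D_2$; $d_2$ moves $Top(D_2)$ to $I$; $d_3$ pops $Top(I)$ and appends it to the output. An operation is legal if it respects the stack restrictions. A permutation is $2$-sortable if some sequence of legal operations outputs its elements in increasing order. Any comparison involving an empty stack is considered true. Conditions: ($\alpha$) $Top(D_2)<Top(I)$; ($\beta$) $Top(D_2)<Top(D_1)$ and $Top(D_1)<Top(I)$; ($\gamma$) $Top(D_1)<Input$, $Input<Top(I)$, and the sequence of input elements from $Input$ up to the first input element larger than $Top(D_2)$ is increasing. *)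

(* Defs.v *)
(* Model of the D^2 I machine (two decreasing stacks D1, D2
   in series followed by an increasing stack I). *)
From mathcomp Require Import all_boot.
Set Implicit Arguments. Unset Strict Implicit. Unset Printing Implicit Defensive.

(* Stacks are lists with the top at the head. *)
Record config := Config {
  input : seq nat;   (* remaining input, next element first *)
  D1 : seq nat;
  D2 : seq nat;
  I  : seq nat;
  output : seq nat
}.

Inductive op := d0 | d1 | d2 | d3.

(* Comparison x < y where an empty stack (None) makes the comparison true. *)
Definition olt (x y : option nat) : bool :=
  match x, y with Some a, Some b => a < b | _, _ => true end.

Definition top (s : seq nat) : option nat := ohead s.

Definition step (o : op) (c : config) : option config :=
  match o with
  | d0 =>
    if input c is x :: rest then
      if olt (top (D1 c)) (Some x)
      then Some (Config rest (x :: D1 c) (D2 c) (I c) (output c)) else None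
    else None
  | d1 =>
    if D1 c is x :: rest then
      if olt (top (D2 c)) (Some x)
      then Some (Config (input c) rest (x :: D2 c) (I c) (output c)) else None
    else None
  | d2 =>
    if D2 c is x :: rest then
      if olt (Some x) (top (I c))
      then Some (Config (input c) (D1 c) rest (x :: I c) (output c)) else None
    else None
  | d3 =>
    if I c is x :: rest then
      Some (Config (input c) (D1 c) (D2 c) rest (rcons (output c) x))
    else None
  end.

Fixpoint run (ops : seq op) (c : config) : option config :=
  match ops with
  | [::] => Some c
  | o :: ops' => if step o c is Some c' then run ops' c' else None
  end.

Definition init (p : seq nat) : config := Config p [::] [::] [::] [::].

Definition is_perm (p : seq nat) : Prop := perm_eq p (iota 1 (size p)).

Definition sorts (ops : seq op) (p : seq nat) : Prop :=
  run ops (init p) = Some (Config [::] [::] [::] [::] (iota 1 (size p))).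

Definition two_sortable (p : seq nat) : Prop := exists ops, sorts ops p.

Definition cond_alpha (c : config) : bool := olt (top (D2 c)) (top (I c)).

Definition cond_beta (c : config) : bool :=
  olt (top (D2 c)) (top (D1 c)) && olt (top (D1 c)) (top (I c)).

(* Condition (gamma): Top(D1) < Input, Input < Top(I), and the input
   sequence from Input up to (and including) the first input element larger
   than Top(D2) is increasing (up to the end of the input if there is no such
   element; if D2 is empty this segment is just [Input]). *)
Definition cond_gamma (c : config) : bool :=
  let inp := input c in
  let k := find (fun x => olt (top (D2 c)) (Some x)) inp in
  [&& olt (top (D1 c)) (top inp), olt (top inp) (top (I c))
    & sorted ltn (take k.+1 inp)].

Definition cond_of (o : op) (c : config) : bool :=
  match o with
  | d0 => cond_gamma c
  | d1 => cond_beta c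
  | d2 => cond_alpha c
  | d3 => true
  end.

Fixpoint run_respects (ops : seq op) (c : config) : bool :=
  match ops with
  | [::] => true
  | o :: ops' =>
    cond_of o c && (if step o c is Some c' then run_respects ops' c' else true)
  end.

(* Main.v *)
Require Import Defs.
From mathcomp Require Import all_boot.
From mathcomp Require Import zify.
Set Implicit Arguments. Unset Strict Implicit.

Definition fin (o : seq nat) := Config [::] [::] [::] [::] o.

Definition pot (c : config) : nat :=
  4 * size (input c) + 3 * size (D1 c) + 2 * size (D2 c) + size (I c).

Lemma pot_step o c c' : step o c = Some c' -> pot c = (pot c').+1.
Proof.
case: c => [inp d1 d2 i out]; case: o => /=.
- case: inp => [|z r] //; case: ifP => // _ [<-]; rewrite /pot /=; lia.
- case: d1 => [|z r] //; case: ifP => // _ [<-]; rewrite /pot /=; lia.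
- case: d2 => [|z r] //; case: ifP => // _ [<-]; rewrite /pot /=; lia.
- case: i => [|z r] // [<-]; rewrite /pot /=; lia.
Qed.

Lemma run_cat w R c : run (w ++ R) c = if run w c is Some c' then run R c' else None.
Proof.
elim: w c => [|o w IH] c //=; case: (step o c) => //.
Qed.

Lemma run_cons o S c : run (o :: S) c = if step o c is Some c' then run S c' else None.
Proof. by []. Qed.

Lemma resp_cons o S c : run_respects (o :: S) c = cond_of o c && (if step o c is Some c' then run_respects S c' else true).
Proof. by []. Qed.

Definition noI (o : op) := match o with d0 | d1 => true | _ => false end.
Definition setIO c i o := Config (input c) (D1 c) (D2 c) i o.

Lemma step_noI o c c' i out : noI o -> step o c = Some c' ->
  [/\ I c' = I c, output c' = output c & step o (setIO c i out) = Some (setIO c' i out)].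
Proof.
case: c => [inp d1 d2 i0 o0]; case: o => //= _.
- case: inp => [|z r] //; case: ifP => // H [<-]; by rewrite /setIO /= ?H.
- case: d1 => [|z r] //; case: ifP => // H [<-]; by rewrite /setIO /= ?H.
Qed.

Lemma run_noI w c c' i out : all noI w -> run w c = Some c' ->
  [/\ I c' = I c, output c' = output c & run w (setIO c i out) = Some (setIO c' i out)].
Proof.
elim: w c => [|o w IH] c /=; first by move=> _ [<-].
move=> /andP [Ho Hw]; case E: (step o c) => [c1|] // Hr.
have [H1 H2 H3] := step_noI i out Ho E.
have [H4 H5 H6] := IH _ Hw Hr.
by rewrite H3 H4 H5 H1 H2.
Qed.

Lemma d3_comm w c c1 c2 : all noI w -> run w c = Some c1 -> step d3 c1 = Some c2 ->
  exists c', step d3 c = Some c' /\ run w c' = Some c2.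
Proof.
move=> Hw Hr.
case E: (I c1) => [|y r]; first by rewrite /= E.
rewrite /= E => -[<-].
have [H1 H2 _] := run_noI [::] [::] Hw Hr.
have [_ _ H3] := run_noI r (rcons (output c1) y) Hw Hr.
exists (setIO c r (rcons (output c1) y)); split.
  by case: c Hr H1 H2 H3 => inp d1 d2 i o /= _ <- <-; rewrite E.
by rewrite H3.
Qed.

Lemma d0_d2 c c1 c2 : step d0 c = Some c1 -> step d2 c1 = Some c2 ->
  exists c', step d2 c = Some c' /\ step d0 c' = Some c2.
Proof.
case: c => [inp d1 d2' i o] /=.
case: inp => [|z r] //; case: ifP => // Hz [<-] /=.
case: d2' => [|x d] //; case: ifP => // Hx [<-].
by exists (Config (z :: r) d1 d (x :: i) o); split; simpl; rewrite ?Hx ?Hz.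
Qed.

Definition badc c := match D2 c, I c with x :: _, y :: _ => y <= x | _, _ => false end.

Lemma inner F : forall R c1, run R c1 = Some (fin F) -> run_respects R c1 -> badc c1 ->
  forall w c0, all noI w -> run w c0 = Some c1 ->
  exists c', step d3 c0 = Some c' /\ exists S, run S c' = Some (fin F).
Proof.
elim=> [|o R IH] c1 /=.
  by move=> [->].
move=> Hr /andP [Hc Hresp] Hb w c0 Hw Hw0.
case E: (step o c1) Hr Hresp => [c2|] // Hr Hresp.
case: o Hc E => /=.
- move=> _ E.
  apply: (IH c2 Hr Hresp _ (rcons w d0) c0).
  + move: E Hb; case: c1 {Hw0} => [inp d1 d2 i o] /=.
    by case: inp => [|z r] //; case: ifP => // _ [<-].
  + by rewrite all_rcons Hw.
  + by rewrite -cats1 run_cat Hw0 /= E.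
- move=> Hc E; move: Hb Hc E; rewrite /cond_beta /badc; case: c1 {Hw0 Hr Hresp} => [inp l1 l2 i o] /=.
  case: l2 => [|x l2] //; case: i => [|y i] // Hyx.
  case: l1 => [|z l1] //= /andP [H1 H2] _.
  have : x < y by apply: ltn_trans H2.
  by rewrite ltnNge Hyx.
- move=> Hc _; move: Hb Hc; rewrite /cond_alpha /badc; case: c1 {Hw0 Hr Hresp} => [inp l1 l2 i o] /=.
  case: l2 => [|x l2] //; case: i => [|y i] // Hyx.
  by rewrite /= ltnNge Hyx.
- move=> _ E.
  have [c' [H1 H2]] := d3_comm Hw Hw0 E.
  exists c'; split => //; exists (w ++ R).
  by rewrite run_cat H2.
Qed.

Lemma gamma_d1 c c1 : step d0 c = Some c1 -> cond_beta c1 -> cond_gamma c.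
Proof.
case: c => [inp d1 d2 i o] /=.
case: inp => [|z r] //; case: ifP => // Hz [<-].
rewrite /cond_beta /cond_gamma /= => /andP [H1 H2].
by rewrite Hz H2 H1 /= take0.
Qed.

Lemma gamma_d0 c c1 c2 : step d0 c = Some c1 -> step d0 c1 = Some c2 -> cond_gamma c1 -> cond_gamma c.
Proof.
case: c => [inp d1 d2 i o] /=.
case: inp => [|z r] //; case: ifP => // Hz [<-] /=.
case: r => [|z' r] //; case: ifP => // Hzz _.
rewrite /cond_gamma /= => /and3P [_ H2 H3].
rewrite Hz /=.
apply/andP; split.
  by case: i H2 => [|y i] //= H; apply: ltn_trans H.
case: (olt (top d2) (Some z)) => //=.
by rewrite Hzz.
Qed.

Lemma key F : forall n c S, pot c <= n -> run S c = Some (fin F) ->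
  exists R, run R c = Some (fin F) /\ run_respects R c.
Proof.
elim=> [|n IH] c [|o S] Hp Hr.
- by exists [::].
- move: Hr => /=; case E: (step o c) => [c1|] //.
  by move: Hp; rewrite (pot_step E).
- by exists [::].
move: Hr => /=; case E: (step o c) => [c1|] // Hr.
have Hp1 : pot c1 <= n by move: Hp; rewrite (pot_step E).
have [R1 [HR1 Hresp1]] := IH c1 S Hp1 Hr.
case Hc: (cond_of o c).
  by exists (o :: R1); rewrite run_cons resp_cons E Hc.
have IH' : forall c' S', pot c = (pot c').+1 ->
   run S' c' = Some (fin F) -> exists R, run R c' = Some (fin F) /\ run_respects R c'.
  move=> c' S' Hpc Hr'; apply: (IH c' S') => //.
  by move: Hp; rewrite Hpc.
case: o E Hc {Hr} => E Hc.
- case: R1 HR1 Hresp1 => [|r R1] /=.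
    move=> [Hf]; move: E; rewrite Hf; case: c {Hp IH' Hc} => [inp d1 d2 i o] /=.
    by case: inp => [|z rr] //; case: ifP.
  case E1: (step r c1) => [c2|] // HR1 /andP [Hcr Hresp].
  case: r E1 Hcr => /= E1 Hcr.
  + by move: Hc; rewrite /= (gamma_d0 E E1 Hcr).
  + by move: Hc; rewrite /= (gamma_d1 E Hcr).
  + have [c' [H1 H2]] := d0_d2 E E1.
    have H3 : run (d0 :: R1) c' = Some (fin F) by rewrite run_cons H2.
    have [R' [HR' HresR']] := IH' c' (d0 :: R1) (pot_step H1) H3.
    exists (d2 :: R'); rewrite run_cons resp_cons H1 HR' HresR' andbT; split => //=.
    by move: H1; rewrite /cond_alpha; case: c {Hp IH' E Hc} => [inp d1 d2' i o] /=;
       case: d2' => [|x d] //; case: ifP.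
  + have E0 : run [:: d0] c = Some c1 by rewrite run_cons E.
    have [c' [H1 H2]] := d3_comm (w := [:: d0]) erefl E0 E1.
    have H3 : run (d0 :: R1) c' = Some (fin F) by move: H2; rewrite !run_cons; case: (step d0 c') => // c3 [->].
    have [R' [HR' HresR']] := IH' c' (d0 :: R1) (pot_step H1) H3.
    by exists (d3 :: R'); rewrite run_cons resp_cons H1 HR' HresR'.
- have Hb : badc c1.
    move: E Hc; rewrite /cond_beta; case: c {Hp IH'} => [inp d1 d2 i o] /=.
    case: d1 => [|x d1] //; case: ifP => // H [<-]; rewrite /cond_beta /badc /= H /=.
    by case: i => [|y i] //=; rewrite ltnNge => /negbFE.
  have E0 : run [:: d1] c = Some c1 by rewrite run_cons E.
  have [c' [H1 [S' H2]]] := inner HR1 Hresp1 Hb (w := [:: d1]) erefl E0.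
  have [R' [HR' HresR']] := IH' c' S' (pot_step H1) H2.
  by exists (d3 :: R'); rewrite run_cons resp_cons H1 HR' HresR'.
- move: E Hc; rewrite /cond_alpha; case: c {Hp IH'} => [inp d1 d2 i o] /=.
  by case: d2 => [|x d] //; case: ifP => // Hx _; rewrite /= /cond_alpha /= Hx.
- by [].
Qed.

Theorem mainTheorem9 (p : seq nat) :
  is_perm p -> two_sortable p ->
  exists ops : seq op, sorts ops p /\ run_respects ops (init p).
Proof.
move=> _ [ops Hs].
exact: (@key (iota 1 (size p)) (pot (init p)) (init p) ops (leqnn _) Hs).
Qed.
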